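(* Let $g_1,\dots,g_\ell,h_1,\dots,h_m\in\mathbb{R}[x]=\mathbb{R}[x_1,\dots,x_n]$, $g_0=1$, $S=\{x: g_i(x)\ge0,\ i=1,\dots,\ell\}$, $I=\langle h_1,\dots,h_m\rangle$, $K=S\cap\mathcal{V}(I)$, and suppose $\mathcal{I}(K)=I$. Fix an integer $k$ with $k\ge \deg g_i$ and $k\ge\deg h_j$ for all $i,j$, let $d_i=\max\{d\in\mathbb{N}: 2d+\deg g_i\le k\}$, $e_j=k-\deg h_j$, $\Lambda(d)=\{\alpha\in\mathbb{N}^n:|\alpha|\le d\}$, $X=\prod_{i=0}^\ell\mathbb{R}[x]_{d_i}^{\Lambda(d_i)}\times\prod_{j=1}^m\mathbb{R}[x]_{e_j}$, and $\phi:X\to\mathbb{R}[x]$, $\phi\big((q_{0\alpha})_{\alpha\in\Lambda(d_0)},\dots,(q_{\ell\alpha})_{\alpha\in\Lambda(d_\ell)},r_1,\dots,r_m\big)=\sum_{i=0}^\ell\sum_{\alpha\in\Lambda(d_i)}q_{i\alpha}^2g_i+\sum_{j=1}^m r_jh_j$. Then for $q\in X$, $\phi(q)\in I$ if and only if $q_{i\alpha}\in(I:\langle g_i\rangle)=\{s\in\mathbb{R}[x]: sg_i\in I\}$ for all $\alpha\in\Lambda(d_i)$ and all $i=0,1,\dots,\ell$.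
   Context: $\mathbb{R}[x]_d$ denotes real polynomials of degree at most $d$. $\mathcal{V}(I)=\{x\in\mathbb{R}^n:p(x)=0\ \forall p\in I\}$ and $\mathcal{I}(K)=\{p\in\mathbb{R}[x]: p|_K=0\}$. *)

(* Defs.v *)
From HB Require Import structures.
From mathcomp Require Import all_boot all_order all_algebra.
From mathcomp Require Import reals.
From mathcomp Require Import mpoly.

Set Implicit Arguments.
Unset Strict Implicit.
Unset Printing Implicit Defensive.

Import Order.TTheory GRing.Theory Num.Theory.
Local Open Scope ring_scope.

Section Defs.
Variables (R : realType) (n : nat).

(* total degree of a polynomial; deg 0 := 0 (msize p = 1 + total degree, msize 0 = 0) *)
Definition deg (p : {mpoly R[n]}) : nat := (msize p).-1.

Definition deg_le (d : nat) (p : {mpoly R[n]}) : Prop := (msize p <= d.+1)%N.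

Definition in_ideal (m : nat) (h : 'I_m -> {mpoly R[n]}) (p : {mpoly R[n]}) : Prop :=
  exists c : 'I_m -> {mpoly R[n]}, p = \sum_(j < m) c j * h j.

Definition variety (m : nat) (h : 'I_m -> {mpoly R[n]}) (x : 'I_n -> R) : Prop :=
  forall p, in_ideal h p -> p.@[x] = 0.

Definition basic_semialg (l : nat) (g : 'I_l -> {mpoly R[n]}) (x : 'I_n -> R) : Prop :=
  forall i, 0 <= (g i).@[x].

Definition Kset (l m : nat) (g : 'I_l -> {mpoly R[n]}) (h : 'I_m -> {mpoly R[n]})
  (x : 'I_n -> R) : Prop := basic_semialg g x /\ variety h x.

Definition vanishing_ideal (K : ('I_n -> R) -> Prop) (p : {mpoly R[n]}) : Prop :=
  forall x, K x -> p.@[x] = 0.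

(* the family g_0 = 1, g_1, ..., g_l, indexed by 'I_l.+1 (index 0 is g_0) *)
Definition gext (l : nat) (g : 'I_l -> {mpoly R[n]}) (i : 'I_l.+1) : {mpoly R[n]} :=
  if unlift ord0 i is Some j then g j else 1.

(* d_i = max { d in N : 2d + deg g_i <= k } *)
Definition dbound (k : nat) (p : {mpoly R[n]}) : nat := ((k - deg p)./2)%N.

End Defs.

(* Main.v *)
Require Import Defs.
From HB Require Import structures.
From mathcomp Require Import all_boot all_order all_algebra.
From mathcomp Require Import reals.
From mathcomp Require Import mpoly.
Import Order.TTheory GRing.Theory Num.Theory.
Local Open Scope ring_scope.

(* g : the g_1..g_l (g_0 = 1 is added via gext); h : the h_1..h_m.
   q i a : q_{i alpha} for i in {0..l}, alpha in Lambda(d_i) = 'X_{1..n < d_i.+1};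
   r j : r_j. *)
Theorem lemma2p4 (R : realType) (n l m : nat)
    (g : 'I_l -> {mpoly R[n]}) (h : 'I_m -> {mpoly R[n]})
    (hIK : forall p : {mpoly R[n]},
        vanishing_ideal (Kset g h) p <-> in_ideal h p)
    (k : nat)
    (hkg : forall i, (deg (g i) <= k)%N)
    (hkh : forall j, (deg (h j) <= k)%N)
    (q : forall i : 'I_l.+1, 'X_{1..n < (dbound k (gext g i)).+1} -> {mpoly R[n]})
    (r : 'I_m -> {mpoly R[n]})
    (hq : forall i a, deg_le (dbound k (gext g i)) (q i a))
    (hr : forall j, deg_le (k - deg (h j)) (r j)) :
  in_ideal h (\sum_(i < l.+1) \sum_(a : 'X_{1..n < (dbound k (gext g i)).+1})
                 (q i a) ^+ 2 * gext g i
              + \sum_(j < m) r j * h j)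
  <-> (forall (i : 'I_l.+1) (a : 'X_{1..n < (dbound k (gext g i)).+1}),
         in_ideal h (q i a * gext g i)).
Proof.
have gext_ge0 : forall x, Kset g h x -> forall i, 0 <= (gext g i).@[x].
  move=> x [Sx _] i; rewrite /gext; case: (unlift ord0 i) => [j|].
    exact: Sx.
  by rewrite meval1 ler01.
have rh0 : forall x, Kset g h x -> (\sum_(j < m) r j * h j).@[x] = 0.
  by move=> x [_ Vx]; apply: Vx; exists r.
split.
- move=> Hphi i a; apply/hIK => x Kx.
  have := (proj2 (hIK _) Hphi) x Kx.
  rewrite mevalD.
rewrite rh0 // addr0 rmorph_sum /=.
  move/eqP; rewrite psumr_eq0; last first.
    move=> i0 _; rewrite rmorph_sum /=; apply: sumr_ge0 => a0 _.
    by rewrite expr2 !mevalM mulr_ge0 ?sqr_ge0 ?gext_ge0.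
  move/allP => /(_ i (mem_index_enum _)) /=.
  rewrite rmorph_sum /= psumr_eq0; last first.
    move=> a0 _.
    by rewrite expr2 !mevalM mulr_ge0 ?sqr_ge0 ?gext_ge0.
  move/allP => /(_ a (mem_index_enum _)) /=.
  rewrite expr2 -mulrA !mevalM mulf_eq0 => /orP [/eqP ->|/eqP //].
  by rewrite mul0r.
- move=> H; apply/hIK => x Kx.
  rewrite mevalD rh0 // addr0 rmorph_sum /=.
  apply: big1 => i _; rewrite rmorph_sum /=; apply: big1 => a _.
  rewrite expr2 -mulrA mevalM.
  by rewrite ((proj2 (hIK _) (H i a)) x Kx) mulr0.
Qed.
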